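(* Let $\rho\in(0,1)$ and $k\ge1$ an integer, and let $\tilde\varepsilon=\rho\,\frac{1+\cos(\frac{2k-1}{2k}\pi)}{1-\cos(\frac{2k-1}{2k}\pi)}$. For every $\varepsilon\in[0,\tilde\varepsilon]$, $$\|p_\varepsilon\|_1=\frac{\tilde\rho_\varepsilon}{2}\Big(\frac{1}{\rho+\varepsilon}\Big)^k\Big(\big(2+\rho-\varepsilon-2\sqrt{(1+\rho)(1-\varepsilon)}\big)^k+\big(2+\rho-\varepsilon+2\sqrt{(1+\rho)(1-\varepsilon)}\big)^k\Big),$$ where $\tilde\rho_\varepsilon=\frac{2\beta_\varepsilon^k}{1+\beta_\varepsilon^{2k}}$ and $\beta_\varepsilon=\frac{1-\sqrt{1-\frac{\rho+\varepsilon}{1+\varepsilon}}}{1+\sqrt{1-\frac{\rho+\varepsilon}{1+\varepsilon}}}$.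
   Context: $\mathbb{R}_k[X]$ denotes real polynomials of degree at most $k$, and $\|p\|_1$ is the sum of absolute values of the coefficients of $p$. $p_\varepsilon$ denotes the minimizer of $\max_{x\in[-\varepsilon,\rho]}|p(x)|$ over $p\in\mathbb{R}_k[X]$ with $p(1)=1$; explicitly $p_\varepsilon(X)=T_k\big(2\frac{X+\varepsilon}{\rho+\varepsilon}-1\big)/\big|T_k\big(2\frac{1+\varepsilon}{\rho+\varepsilon}-1\big)\big|$, with $T_k$ the Chebyshev polynomial of the first kind of degree $k$. *)

(* Defs.v *)
From HB Require Import structures.
From mathcomp Require Import all_boot all_order all_algebra.
From mathcomp Require Import all_classical all_reals all_analysis.
Set Implicit Arguments. Unset Strict Implicit. Unset Printing Implicit Defensive.
Import Order.TTheory GRing.Theory Num.Theory.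
Local Open Scope ring_scope.

(* Chebyshev polynomials of the first kind: T_0 = 1, T_1 = X,
   T_{n+2} = 2 X T_{n+1} - T_n.  chebT_pair n = (T_n, T_{n+1}). *)
Fixpoint chebT_pair (R : ringType) (n : nat) : {poly R} * {poly R} :=
  match n with
  | 0%N => (1, 'X)
  | n'.+1 => let: (a, b) := chebT_pair R n' in (b, 2%:R *: 'X * b - a)
  end.

Definition chebT (R : ringType) (n : nat) : {poly R} := (chebT_pair R n).1.

Definition norm1 (R : numDomainType) (p : {poly R}) : R :=
  \sum_(i < size p) `|p`_i|.

Definition p_eps (R : realFieldType) (k : nat) (rho eps : R) : {poly R} :=
  (`|(chebT R k).[2 * (1 + eps) / (rho + eps) - 1]|)^-1 *:
    ((chebT R k) \Po ((2 / (rho + eps)) *: 'X + (2 * eps / (rho + eps) - 1)%:P)).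

(* Main.v *)
Require Import Defs.
From HB Require Import structures.
From mathcomp Require Import all_boot all_order all_algebra.
From mathcomp Require Import all_classical all_reals all_analysis.
From mathcomp Require Import ring lra zify.
Import Order.TTheory GRing.Theory Num.Theory.
Local Open Scope ring_scope.


Section Cheb.
Variable R : realType.

Lemma chebT0 : chebT R 0 = 1. Proof. by []. Qed.
Lemma chebT1 : chebT R 1 = 'X. Proof. by []. Qed.
Lemma chebT_rec n : chebT R n.+2 = 2%:R *: 'X * chebT R n.+1 - chebT R n.
Proof. by rewrite /chebT /=; case: (chebT_pair R n). Qed.

Lemma chebT_eval (x t : R) n : t ^+ 2 = x ^+ 2 - 1 ->
  (chebT R n).[x] = ((x - t) ^+ n + (x + t) ^+ n) / 2.
Proof.
move=> ht.
have hu : (x - t) ^+ 2 = 2 * x * (x - t) - 1 by rewrite sqrrB ht; ring.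
have hv : (x + t) ^+ 2 = 2 * x * (x + t) - 1 by rewrite sqrrD ht; ring.
suff: (chebT R n).[x] = ((x - t) ^+ n + (x + t) ^+ n) / 2 /\
      (chebT R n.+1).[x] = ((x - t) ^+ n.+1 + (x + t) ^+ n.+1) / 2 by case.
elim: n => [|n [IH1 IH2]].
  by rewrite chebT0 chebT1 hornerC hornerX !expr0 !expr1; split; field; by [].
split=> //; rewrite chebT_rec hornerD hornerN hornerM hornerZ hornerX IH1 IH2.
rewrite -[n.+2]addn2 !exprD hu hv !exprS; field.
by [].

Qed.

Lemma chebT_cos n (th : R) : (chebT R n).[cos th] = cos (n%:R * th).
Proof.
suff: (chebT R n).[cos th] = cos (n%:R * th) /\
      (chebT R n.+1).[cos th] = cos (n.+1%:R * th) by case.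
elim: n => [|n [IH1 IH2]].
  by rewrite chebT0 chebT1 hornerC hornerX mul0r cos0 mul1r.
split=> //; rewrite chebT_rec hornerD hornerN hornerM hornerZ hornerX IH1 IH2.
have e1 : n.+2%:R * th = n.+1%:R * th + th by rewrite [in LHS]mulrS; ring.
have e2 : n%:R * th = n.+1%:R * th - th by rewrite mulrS; ring.
rewrite e1 e2 !cosD cosN sinN; ring.
Qed.

Lemma size_chebT n : (size (chebT R n) <= n.+1)%N.
Proof.
suff: (size (chebT R n) <= n.+1)%N /\ (size (chebT R n.+1) <= n.+2)%N by case.
elim: n => [|n [IH1 IH2]].
  by rewrite chebT0 chebT1 size_poly1 size_polyX.
split=> //; rewrite chebT_rec.
apply: (leq_trans (size_add _ _)); rewrite geq_max size_opp.
rewrite (leq_trans IH1) ?andbT; last by lia.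
apply: (leq_trans (size_polyMleq _ _)).
have := size_scale_leq 2%:R ('X : {poly R}); rewrite size_polyX => h.
move: h IH2; case: (size (2%:R *: 'X)) => [|a] /=; lia.
Qed.

End Cheb.


Section H.
Variable R : realType.

Lemma poly_ext (p q : {poly R}) : (forall x, p.[x] = q.[x]) -> p = q.
Proof.
move=> h; apply/eqP; rewrite -subr_eq0; apply/negPn/negP => nz.
pose rs : seq R := [seq i%:R | i <- iota 0 (size (p - q))].
have hall : all (root (p - q)) rs.
  by apply/allP => z /mapP[i _ ->]; rewrite rootE hornerD hornerN h subrr.
have hu : uniq rs.
  by rewrite map_inj_uniq ?iota_uniq // => i j /eqP; rewrite eqr_nat => /eqP.
by have := max_poly_roots nz hall hu; rewrite size_map size_iota ltnn.
Qed.

Lemma prodN (s : seq R) (f : R -> R) :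
  \prod_(z <- s) (- f z) = (-1) ^+ size s * \prod_(z <- s) f z.
Proof.
elim: s => [|z s IH]; first by rewrite !big_nil expr0 mul1r.
by rewrite !big_cons IH /= exprS; ring.
Qed.

Lemma prod_coef_ge0 (s : seq R) (F : R -> {poly R}) :
  (forall z i, z \in s -> 0 <= (F z)`_i) ->
  forall i, 0 <= (\prod_(z <- s) F z)`_i.
Proof.
elim: s => [|z s IH] h i.
  by rewrite big_nil coef1; case: (i == 0)%N.
rewrite big_cons coefM; apply: sumr_ge0 => j _; apply: mulr_ge0.
  by apply: h; rewrite mem_head.
by apply: IH => y m hy; apply: h; rewrite in_cons hy orbT.
Qed.

Lemma cos_le_mono (x y : R) : 0 <= x -> x <= y -> y <= pi -> cos y <= cos x.
Proof.
move=> x0 xy ypi; rewrite le_eqVlt; case: (eqVneq x y) => [->|nxy]; first by rewrite eqxx.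
apply/orP; right; rewrite ltr_cos ?in_itv /=.
- by rewrite lt_neqAle nxy xy.
- by rewrite x0 (le_trans xy ypi).
- by rewrite (le_trans x0 xy) ypi.
Qed.

Lemma sin_natpi n : sin (n%:R * pi) = 0 :> R.
Proof.
elim: n => [|n IH]; first by rewrite mul0r sin0.
by rewrite mulrS mulrDl mul1r addrC sinDpi IH oppr0.
Qed.

End H.


Section Roots.
Variable R : realType.
Variable k : nat.
Hypothesis k1 : (1 <= k)%N.

Definition th (i : nat) : R := (2 * i%:R + 1) / (2 * k%:R) * pi.
Definition xs : seq R := [seq cos (th i) | i <- iota 0 k].

Lemma kR0 : k%:R != 0 :> R.
Proof. by rewrite pnatr_eq0 -lt0n. Qed.

Lemma th_mono i j : (i <= j)%N -> th i <= th j.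
Proof.
move=> ij; rewrite /th ler_wpM2r ?pi_ge0 // ler_pM2r; last first.
  by rewrite invr_gt0 mulr_gt0 // ltr0n.
by rewrite lerD2r ler_pM2l // ler_nat.
Qed.

Lemma th_range i : (i < k)%N -> 0 <= th i <= pi.
Proof.
move=> ik; apply/andP; split.
  by rewrite /th mulr_ge0 ?pi_ge0 // divr_ge0 // addr_ge0 // mulr_ge0.
rewrite /th -[X in _ <= X]mul1r ler_wpM2r ?pi_ge0 // ler_pdivrMr; last by rewrite mulr_gt0 // ltr0n.
rewrite mul1r; have : (i.+1%:R <= k%:R :> R) by rewrite ler_nat.
rewrite -natr1; lra.
Qed.

Lemma th_root i : (chebT R k).[cos (th i)] = 0.
Proof.
rewrite chebT_cos.
have -> : k%:R * th i = i%:R * pi + pi / 2.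
  by rewrite /th; field; rewrite kR0.
by rewrite cosDpihalf sin_natpi oppr0.
Qed.

Lemma xs_uniq : uniq xs.
Proof.
rewrite map_inj_in_uniq ?iota_uniq // => i j; rewrite !mem_iota /= !add0n => ik jk.
move/cos_inj; rewrite !in_itv /= !th_range // => /(_ isT isT).
rewrite /th => /(mulIf (lt0r_neq0 (pi_gt0 R))) /(mulIf _).
have h2 : 2 * k%:R != 0 :> R by rewrite mulf_neq0 // kR0.
move/(_ (invr_neq0 h2)) => /addIr h.
by apply/eqP; rewrite -(eqr_nat R); apply/eqP; lra.
Qed.

Definition Cmin : R := cos ((2 * k%:R - 1) / (2 * k%:R) * pi).

Lemma thmax : th k.-1 = (2 * k%:R - 1) / (2 * k%:R) * pi.
Proof.
rewrite /th; congr (_ / _ * _).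
have hk : k%:R = k.-1%:R + 1 :> R by rewrite natr1 prednK.
by rewrite hk; ring.
Qed.

Lemma xs_ge z : z \in xs -> Cmin <= z.
Proof.
case/mapP => i; rewrite mem_iota add0n => /andP[_ ik] ->.
rewrite /Cmin -thmax; apply: cos_le_mono.
- by case/andP: (@th_range i ik).
- by apply: th_mono; lia.
- by case/andP: (@th_range k.-1 ltac:(lia)).
Qed.

Lemma Cmin_le0 : Cmin <= 0.
Proof.
rewrite /Cmin -thmax.
have -> : th k.-1 = (th k.-1 - pi) + pi by ring.
rewrite cosDpi oppr_le0 cos_ge0_pihalf //.
have [h0 h1] := andP (@th_range k.-1 ltac:(lia)).
have : pi / 2 <= th k.-1.
  rewrite thmax; have hk : 1 <= k%:R :> R by rewrite ler1n.
  have hq : 1/2 <= (2 * k%:R - 1) / (2 * k%:R) :> R.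
    by rewrite ler_pdivlMr ?mulr_gt0 ?ltr0n //; lra.
  have := pi_gt0 R; nra.
have := pi_gt0 R; lra.
Qed.

Lemma chebT_fact : exists c, chebT R k = c%:P * \prod_(z <- xs) ('X - z%:P).
Proof.
have ha : all (root (chebT R k)) xs.
  by apply/allP => z /mapP[i _ ->]; rewrite /root th_root.
have hu : uniq_roots xs by rewrite uniq_rootsE xs_uniq.
have [q hq] := uniq_roots_prod_XsubC ha hu.
exists q`_0; rewrite hq; congr (_ * _); apply: size1_polyC.
have nz : chebT R k != 0.
  apply/eqP => h; have := chebT_cos R k 0; rewrite h horner0 mulr0 cos0.
  by move/eqP; rewrite eq_sym oner_eq0.
have qnz : q != 0 by apply: contraNneq nz => q0; rewrite hq q0 mul0r.
have := size_chebT R k; rewrite hq size_mul // ?monic_neq0 ?monic_prod_XsubC //.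
rewrite size_prod_XsubC size_map size_iota addnS /=; set m := size q; lia.
Qed.

End Roots.


Lemma aux_hD (R : realFieldType) (rho eps r : R) : 0 <= r -> r ^+ 2 = (1 + rho) * (1 - eps) ->
  0 < 2 + rho - eps -> 2 * r <= 2 + rho - eps.
Proof.
move=> h0 h1 h2.
have h3 : (2 * r) ^+ 2 <= (2 + rho - eps) ^+ 2.
  rewrite exprMn h1 -subr_ge0.
  have -> : (2 + rho - eps) ^+ 2 - 2 ^+ 2 * ((1 + rho) * (1 - eps)) = (rho + eps) ^+ 2 by ring.
  exact: sqr_ge0.
by rewrite -ler_sqr ?nnegrE // ?mulr_ge0 // ltW.
Qed.

Lemma aux_m (R : realFieldType) (D r e : R) : e != 0 -> - (D / e) - - (2 * r) / e = - ((D - 2 * r) / e).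
Proof. by move=> h; field. Qed.
Lemma aux_p (R : realFieldType) (D r e : R) : e != 0 -> - (D / e) + - (2 * r) / e = - ((D + 2 * r) / e).
Proof. by move=> h; field. Qed.
Lemma aux_z (R : realFieldType) (rho eps : R) : rho + eps != 0 ->
  2 / (rho + eps) * -1 + (2 * eps / (rho + eps) - 1) = - ((2 + rho - eps) / (rho + eps)).
Proof. by move=> h; field. Qed.
Lemma aux_t (R : realFieldType) (rho eps r : R) : rho + eps != 0 -> r ^+ 2 = (1 + rho) * (1 - eps) ->
  (- (2 * r) / (rho + eps)) ^+ 2 = (- ((2 + rho - eps) / (rho + eps))) ^+ 2 - 1.
Proof. by move=> h hr; rewrite sqrrN !expr_div_n sqrrN exprMn hr; field. Qed.

Lemma aux_c0 (R : realFieldType) (rho eps s : R) : 0 <= s -> s < 1 -> 0 <= eps ->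
  s ^+ 2 = 1 - (rho + eps) / (1 + eps) ->
  2 * (1 + eps) / (rho + eps) - 1 = ((1 - s) / (1 + s) + ((1 - s) / (1 + s))^-1) / 2.
Proof.
move=> hs0 hs1 he hs2.
have h1e : 1 + eps != 0 by rewrite gt_eqF //; lra.
have hrho : rho = (1 - s ^+ 2) * (1 + eps) - eps by rewrite hs2; field.
have h1s : 1 - s != 0 by rewrite gt_eqF //; lra.
have h1s' : 1 + s != 0 by rewrite gt_eqF //; lra.
have hss : 1 - s ^+ 2 != 0 by rewrite gt_eqF //; nra.
rewrite hrho; field.
by rewrite h1s h1s' addrNK mulf_neq0.
Qed.

Lemma aux_T (R : realType) (k : nat) (b : R) : 0 < b ->
  `|(chebT R k).[(b + b^-1) / 2]|^-1 = 2 * b ^+ k / (1 + b ^+ (2 * k)).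
Proof.
move=> hb.
have hb0 : b != 0 by rewrite gt_eqF.
have ht : ((b^-1 - b) / 2) ^+ 2 = ((b + b^-1) / 2) ^+ 2 - 1 by field.
rewrite (@chebT_eval R _ _ k ht).
have -> : (b + b^-1) / 2 - (b^-1 - b) / 2 = b by field.
have -> : (b + b^-1) / 2 + (b^-1 - b) / 2 = b^-1 by field.
have hu : 0 < b ^+ k by rewrite exprn_gt0.
rewrite exprVn ger0_norm; last by rewrite divr_ge0 // addr_ge0 // ltW // invr_gt0.
rewrite mulnC exprM.
have hu0 : b ^+ k != 0 by rewrite gt_eqF.
have hu1 : 1 + (b ^+ k) ^+ 2 != 0 by rewrite gt_eqF // ltr_pwDl // sqr_ge0.
have hu2 : b ^+ k + (b ^+ k)^-1 != 0 by rewrite gt_eqF // addr_gt0 // invr_gt0.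
move: hu0 hu1 hu2; set u := b ^+ k => hu0 hu1 hu2.
by field; rewrite hu0 hu1.
Qed.

Lemma aux_s1 (R : realFieldType) (s q : R) : 0 <= s -> 0 < q -> s ^+ 2 = 1 - q -> s < 1.
Proof. move=> h0 h1 h2; nra. Qed.

Lemma aux_abs (R : realFieldType) k (X Y : R) : 0 <= X -> 0 <= Y ->
  `|((- X) ^+ k + (- Y) ^+ k) / 2| = (X ^+ k + Y ^+ k) / 2.
Proof.
move=> hX hY; rewrite (exprNn X) (exprNn Y) -mulrDr -mulrA normrM normrX normrN1 expr1n mul1r.
by rewrite ger0_norm // divr_ge0 // addr_ge0 // exprn_ge0.
Qed.

Lemma absM_nonneg (R : realType) (g S : R) : 0 <= S -> `|g| * S = `|g * S|.
Proof. by move=> h; rewrite normrM (ger0_norm h). Qed.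

Theorem lemma3 (R : realType) (rho : R) (k : nat) (eps : R) :
  0 < rho -> rho < 1 -> (1 <= k)%N ->
  0 <= eps ->
  eps <= rho * (1 + cos ((2 * k%:R - 1) / (2 * k%:R) * pi))
              / (1 - cos ((2 * k%:R - 1) / (2 * k%:R) * pi)) ->
  let s := Num.sqrt (1 - (rho + eps) / (1 + eps)) in
  let beta := (1 - s) / (1 + s) in
  let rho_t := 2 * beta ^+ k / (1 + beta ^+ (2 * k)) in
  let r := Num.sqrt ((1 + rho) * (1 - eps)) in
  norm1 (p_eps k rho eps) =
    rho_t / 2 * (1 / (rho + eps)) ^+ k *
      ((2 + rho - eps - 2 * r) ^+ k + (2 + rho - eps + 2 * r) ^+ k).
Proof.
move=> h0 h1 hk he0 he1 s beta rho_t r.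
have [c hT] := chebT_fact R k hk.
have hC0 := Cmin_le0 R k hk.
have hCx := xs_ge R k hk.
move: he1 hC0 hCx; rewrite /Cmin; set C := cos _ => he1 hC0 hCx.
have hre : 0 < rho + eps by lra.
have hC1 : 0 < 1 - C by lra.
have he2 : eps * (1 - C) <= rho * (1 + C) by rewrite -ler_pdivlMr.
have hepsrho : eps <= rho by nra.
set a := 2 / (rho + eps).
set b := 2 * eps / (rho + eps) - 1.
have ha : 0 <= a by rewrite /a divr_ge0 // ltW.
have hb : b <= C.
  rewrite /b lerBlDr ler_pdivrMr //; nra.
set T := chebT R k in hT *.
set kap := `|T.[2 * (1 + eps) / (rho + eps) - 1]|^-1.
set p := p_eps k rho eps.
have Hp : forall y, p.[y] = kap * T.[a * y + b].
  by move=> y; rewrite /p /p_eps hornerZ horner_comp hornerD hornerZ hornerX hornerC.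
set P := \prod_(z <- xs R k) (a *: 'X + (z - b)%:P).
set gam := kap * c * (-1) ^+ k.
set Q := \poly_(i < size p) ((-1) ^+ i * p`_i).
have HQ : forall y, Q.[y] = p.[- y].
  move=> y; rewrite horner_poly horner_coef; apply: eq_bigr => i _.
  by rewrite [(- y) ^+ _]exprNn; ring.
have hQP : Q = gam *: P.
  apply: poly_ext => y; rewrite HQ Hp hornerZ hT hornerM hornerC !horner_prod.
  rewrite /gam -!mulrA; congr (_ * (_ * _)).
  rewrite (eq_bigr (fun z => - (a * y + (z - b)))); last first.
    by move=> z _; rewrite hornerXsubC /a; ring.
  rewrite prodN size_map size_iota; congr (_ * _); apply: eq_bigr => z _.
  by rewrite hornerD hornerZ hornerX hornerC.
have hP : forall i, 0 <= P`_i.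
  apply: prod_coef_ge0 => z i hz.
  rewrite coefD coefZ coefX coefC; apply: addr_ge0.
    by apply: mulr_ge0 => //; case: (i == 1)%N.
  by case: (i == 0)%N => //; rewrite subr_ge0 (le_trans hb) ?hCx.
have Hn : norm1 p = `|p.[-1]|.
  have e1 : Q.[1] = \sum_(i < size p) Q`_i.
    rewrite (@horner_coef_wide _ (size p)) ?size_poly //.
    by apply: eq_bigr => i _; rewrite expr1n mulr1.
  have e2 : forall i : 'I_(size p), `|p`_i| = `|gam| * P`_i.
    move=> i; rewrite -(ger0_norm (hP i)) -normrM -coefZ -hQP /Q coef_poly ltn_ord.
    by rewrite normrM normrX normrN1 expr1n mul1r.
  have e3 : \sum_(i < size p) (gam *: P)`_i = gam * \sum_(i < size p) P`_i.
    by rewrite mulr_sumr; apply: eq_bigr => i _; rewrite coefZ.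
  rewrite /norm1 -HQ e1 hQP e3 (eq_bigr _ (fun i _ => e2 i)) -mulr_sumr.
  have hs : 0 <= \sum_(i < size p) P`_i by apply: sumr_ge0 => i _.
  apply: absM_nonneg; apply: sumr_ge0 => i _; exact: hP.
rewrite Hn Hp normrM (@ger0_norm _ kap); last by rewrite invr_ge0.
have hr2 : r ^+ 2 = (1 + rho) * (1 - eps) by rewrite sqr_sqrtr // mulr_ge0 //; lra.
have hr0 : 0 <= r := sqrtr_ge0 _.
have hD : 2 * r <= 2 + rho - eps by apply: aux_hD => //; lra.
have hre0 : rho + eps != 0 by rewrite gt_eqF.
have hq : 0 < (rho + eps) / (1 + eps) by rewrite divr_gt0 //; lra.
have hs2 : s ^+ 2 = 1 - (rho + eps) / (1 + eps).
  by rewrite sqr_sqrtr // subr_ge0 ler_pdivrMr; lra.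
have hs0 : 0 <= s := sqrtr_ge0 _.
have hs1 : s < 1 by move: hs0 hq hs2; apply: aux_s1.
have hbeta : 0 < beta by rewrite divr_gt0 //; lra.
rewrite /a /b (@aux_z _ _ _ hre0) /T (@chebT_eval R _ _ k (@aux_t _ _ _ _ hre0 hr2)).
rewrite (@aux_m _ _ _ _ hre0) (@aux_p _ _ _ _ hre0).
have hX : 0 <= (2 + rho - eps - 2 * r) / (rho + eps).
  by rewrite divr_ge0 ?subr_ge0 // ltW.
have hY : 0 <= (2 + rho - eps + 2 * r) / (rho + eps).
  by apply: divr_ge0; [lra | exact: ltW].
rewrite (@aux_abs _ k _ _ hX hY).
rewrite /kap /T (@aux_c0 _ _ _ _ hs0 hs1 he0 hs2) -/beta (@aux_T _ k _ hbeta) -/rho_t.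
rewrite !expr_div_n !expr1n.
move: rho_t => rt; ring.
Qed.
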